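(* Let $G$ be a connected graph and let $H$ be a graph (not necessarily connected) that is not complete. Then $$\dim_{n\ell}(G\odot H)=n(G)\cdot \dim_{n\ell}(H+K_1).$$
   Context: Graphs are finite and simple; $d(u,v)$ is the shortest-path distance and $n(G)$ the number of vertices. A set $X\subseteq V(G)$ resolves two vertices $u,v$ if some $x\in X$ satisfies $d(u,x)\neq d(v,x)$. $X$ is a nonlocal resolving set of a connected graph if it resolves every pair of distinct non-adjacent vertices; the nonlocal metric dimension $\dim_{n\ell}$ is the minimum size of a nonlocal resolving set. The join $G+H$ is obtained from disjoint copies of $G$ and $H$ by adding all edges between them. For $V(G)=\{g_1,\dots,g_{n(G)}\}$, the corona product $G\odot H$ is obtained from the disjoint union of $G$ and $n(G)$ copies $H_1,\dots,H_{n(G)}$ of $H$ by joining $g_i$ to every vertex of $H_i$ for each $i$. *)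

(* Defs.v *)
From mathcomp Require Import all_boot.
Set Implicit Arguments. Unset Strict Implicit. Unset Printing Implicit Defensive.

Section Graphs.
Variable T : finType.
Implicit Types (e : rel T).

Definition simple_graph e := symmetric e /\ irreflexive e.

Definition connected_graph e := forall u v : T, connect e u v.

Definition complete_graph e := forall u v : T, u != v -> e u v.

Fixpoint reach e (n : nat) (u v : T) : bool :=
  match n with
  | 0 => u == v
  | n'.+1 => reach e n' u v || [exists w, reach e n' u w && e w v]
  end.

(* shortest-path distance; equals #|T| if v is not reachable from u
   (only used on connected graphs, where it is the usual distance) *)
Definition dist e (u v : T) : nat := find (fun n => reach e n u v) (iota 0 #|T|).

Definition nonlocal_resolvingb e (X : {set T}) : bool :=
  [forall u, forall v, (u != v) && ~~ e u v ==> [exists x in X, dist e u x != dist e v x]].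

Definition dim_nl e : nat :=
  \big[minn/#|T|]_(X : {set T} | nonlocal_resolvingb e X) #|X|.
End Graphs.

Definition join_rel (T1 T2 : finType) (eG : rel T1) (eH : rel T2) : rel (T1 + T2) :=
  fun x y => match x, y with
  | inl a, inl b => eG a b
  | inr a, inr b => eH a b
  | _, _ => true
  end.

Definition K1 : rel unit := fun _ _ => false.

(* corona G ⊙ H: vertices inl g (of G) and inr (g, h) (vertex h of the copy H_g) *)
Definition corona_rel (T1 T2 : finType) (eG : rel T1) (eH : rel T2)
  : rel (T1 + (T1 * T2)) :=
  fun x y => match x, y with
  | inl a, inl b => eG a b
  | inr (i, h), inr (j, k) => (i == j) && eH h k
  | inl a, inr (i, _) => a == i
  | inr (i, _), inl a => a == i
  end.

(* Main.v *)
Require Import Defs.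
From mathcomp Require Import all_boot zify.
Set Implicit Arguments. Unset Strict Implicit. Unset Printing Implicit Defensive.

Section Gen.
Variable T : finType.
Variable e : rel T.

Lemma reach_mono n u v : reach e n u v -> reach e n.+1 u v.
Proof. by move=> h /=; rewrite h. Qed.

Lemma reach_le n m u v : n <= m -> reach e n u v -> reach e m u v.
Proof.
move=> /subnKC <-; elim: (m - n) => [|k IH]; first by rewrite addn0.
by move=> h; rewrite addnS; apply: reach_mono; apply: IH.
Qed.

Lemma reach_refl n u : reach e n u u.
Proof. by apply: (@reach_le 0) => //=. Qed.

Lemma reach1 u v : reach e 1 u v = (u == v) || e u v.
Proof.
rewrite /=; congr orb; apply/existsP/idP => [[w /andP[/eqP -> //]]|h].
by exists u; rewrite eqxx.
Qed.

Lemma reachS n u v :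
  reach e n.+1 u v = (u == v) || [exists w, e u w && reach e n w v].
Proof.
elim: n v => [|n IH] v.
  rewrite reach1; congr orb; apply/idP/existsP => [h|[w /andP[h /eqP <-]] //].
  by exists v; rewrite h /= eqxx.
apply/idP/idP.
- rewrite -[reach e n.+2 u v]/(reach e n.+1 u v || [exists w, reach e n.+1 u w && e w v]) => /orP[|/existsP[w /andP[]]].
    rewrite IH => /orP[->//|/existsP[w /andP[h1 h2]]].
    by apply/orP; right; apply/existsP; exists w; rewrite h1 reach_mono.
  rewrite IH => /orP[/eqP <- h|/existsP[w' /andP[h1 h2]] h3].
    by apply/orP; right; apply/existsP; exists v; rewrite h reach_refl.
  apply/orP; right; apply/existsP; exists w'; rewrite h1 /=.
  by apply/orP; right; apply/existsP; exists w; rewrite h2 h3.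
- case/orP => [/eqP <-|/existsP[w /andP[h1]]]; first exact: reach_refl.
  rewrite -[reach e n.+1 w v]/(reach e n w v || [exists w', reach e n w w' && e w' v]) => /orP[h2|/existsP[w' /andP[h2 h3]]].
    by apply: reach_mono; rewrite IH; apply/orP; right; apply/existsP; exists w; rewrite h1.
  rewrite -[reach e n.+2 u v]/(reach e n.+1 u v || [exists w, reach e n.+1 u w && e w v]).
  apply/orP; right; apply/existsP; exists w'; rewrite h3 andbT IH.
  by apply/orP; right; apply/existsP; exists w; rewrite h1.
Qed.

Lemma reach2 u w v : e u w -> e w v -> reach e 2 u v.
Proof.
move=> h1 h2; rewrite reachS; apply/orP; right; apply/existsP; exists w.
by rewrite h1 reach1 h2 orbT.
Qed.

Lemma dist_leP n u v : n < #|T| -> (dist e u v <= n) = reach e n u v.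
Proof.
move=> hn; rewrite /dist; apply/idP/idP => [h|h].
  have hs : find (fun n => reach e n u v) (iota 0 #|T|) < size (iota 0 #|T|).
    by rewrite size_iota; apply: leq_ltn_trans hn.
  have hs2 := hs; rewrite size_iota in hs2.
  move: hs; rewrite -has_find => hs.
  have := nth_find 0 hs; rewrite nth_iota //.
  by rewrite add0n => /(reach_le h).
rewrite leqNgt; apply/negP => hlt.
have := before_find 0 hlt; rewrite nth_iota // add0n => hf.
by rewrite hf in h.
Qed.

Lemma dist_le_card u v : dist e u v <= #|T|.
Proof. by rewrite /dist; have := find_size (fun n => reach e n u v) (iota 0 #|T|); rewrite size_iota. Qed.

Lemma dist_eq u v x : (forall n, n < #|T| -> reach e n u x = reach e n v x) ->
  dist e u x = dist e v x.
Proof.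
move=> h.
have H : forall a b, (forall n, n < #|T| -> reach e n a x -> reach e n b x) -> dist e b x <= dist e a x.
  move=> a b hab; have := dist_le_card a x; rewrite leq_eqVlt => /orP[/eqP ->|hlt].
    exact: dist_le_card.
  by rewrite dist_leP // hab // -dist_leP.
by apply/eqP; rewrite eqn_leq !H // => n hn; rewrite h.
Qed.

Lemma dist_exact n u v : n < #|T| -> reach e n u v ->
  (if n is n'.+1 then ~~ reach e n' u v else true) -> dist e u v = n.
Proof.
move=> hn hr; case: n hn hr => [|n] hn hr h; apply/eqP; rewrite eqn_leq dist_leP ?hr //.
by rewrite ltnNge dist_leP ?h // ltnW.
Qed.

Lemma dist_gt n u v : n < #|T| -> ~~ reach e n u v -> n < dist e u v.
Proof. by move=> hn h; rewrite ltnNge dist_leP. Qed.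

Lemma dist_self u : dist e u u = 0.
Proof. by rewrite /dist; case: #|T| => //= n; rewrite eqxx. Qed.
End Gen.

Section Bigmin.
Variables (I : finType) (P : pred I) (F : I -> nat) (idx : nat).
Lemma bigmin_le i : P i -> \big[minn/idx]_(j | P j) F j <= F i.
Proof.
move=> hi; have : i \in index_enum I by rewrite mem_index_enum.
elim: (index_enum I) => [//|j r IH]; rewrite inE big_cons.
case/orP => [/eqP <-|/IH h]; first by rewrite hi geq_minl.
by case: (P j) => //; rewrite geq_min h orbT.
Qed.
Lemma bigmin_ge k : k <= idx -> (forall i, P i -> k <= F i) -> k <= \big[minn/idx]_(j | P j) F j.
Proof. by move=> h1 h2; apply: (big_ind (fun r => k <= r)) => // x y hx hy; rewrite leq_min hx hy. Qed.
End Bigmin.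

Lemma inr_eq (A B : eqType) (a b : B) : (@inr A B a == inr b) = (a == b).
Proof. by apply/eqP/eqP => [[]|->]. Qed.
Lemma inl_eq (A B : eqType) (a b : A) : (@inl A B a == inl b) = (a == b).
Proof. by apply/eqP/eqP => [[]|->]. Qed.
Lemma inlr_eq (A B : eqType) (a : A) (b : B) : (inl a == inr b) = false.
Proof. by apply/eqP. Qed.
Lemma inrl_eq (A B : eqType) (a : A) (b : B) : (inr b == inl a) = false.
Proof. by apply/eqP. Qed.
Definition seqE := (inr_eq, inl_eq, inlr_eq, inrl_eq, xpair_eqE).

Section Corona.
Variables (T1 T2 : finType) (eG : rel T1) (eH : rel T2).
Local Notation V := (T1 + T1 * T2)%type.
Local Notation C := (corona_rel eG eH).
Hypothesis hN : 2 < #|{: T1 + T1 * T2}|.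

Definition tr (h k : T2) := if h == k then 0 else if eH h k then 1 else 2.

Lemma C_in i h k : dist C (inr (i,h)) (inr (i,k)) = tr h k.
Proof.
rewrite /tr; case: eqP => [->|hk]; first exact: dist_self.
case: ifP => he.
  apply: dist_exact; first exact: ltn_trans hN.
    by rewrite reach1 /= eqxx he orbT.
  by rewrite /=; apply/eqP => -[].
apply: dist_exact => //.
  by apply: (@reach2 _ _ _ (inl i)) => /=.
by rewrite reach1 /= eqxx he andbF orbF; apply/eqP => -[].
Qed.

Definition out_of i (x : V) := if x is inr p then p.1 != i else true.

Lemma C_step i x n h : out_of i x -> reach C n.+1 (inr (i,h)) x = reach C n (inl i) x.
Proof.
move=> ho.
have hx : forall h, (inr (i, h) == x) = false.
  by move=> h'; case: x ho => [a|[j k]] //= ho; rewrite !seqE // eq_sym (negbTE ho).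
elim: n h => [|n IH] h.
  rewrite reach1 /= hx /=; case: x ho hx => [a|[j k]] /= ho _; rewrite !seqE.
    by rewrite eq_sym.
  by rewrite eq_sym (negbTE ho).
rewrite reachS hx orFb; apply/existsP/idP => [[w /andP[hw hr]]|hr].
  case: w hw hr => [a|[j k]] hw hr.
    by move: hw hr => /= /eqP ->.
  move: hw => /= /andP[/eqP hij _]; move: hr; rewrite -hij IH; exact: reach_mono.
by exists (inl i); rewrite hr andbT /= eqxx.
Qed.

Lemma C_out i h k x : out_of i x -> dist C (inr (i,h)) x = dist C (inr (i,k)) x.
Proof.
move=> ho; apply: dist_eq => -[|n] _; last by rewrite !C_step.
by case: x ho => [a|[j k']] //= ho; rewrite !seqE; have -> : (i == j) = false by rewrite eq_sym (negbTE ho).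
Qed.

Lemma C_far i j h k : j != i -> 2 < dist C (inr (j,k)) (inr (i,h)).
Proof.
move=> hji; have h1 := negbTE hji; have h2 : (i == j) = false by rewrite eq_sym.
apply: dist_gt => //; rewrite reachS negb_or; apply/andP; split.
  by rewrite !seqE h1.
apply/existsP => -[w /andP[hw]]; rewrite reach1.
case: w hw => [a|[j' k']] /=.
  by move=> /eqP ->; rewrite h1.
by case/andP => /eqP <- _; rewrite !seqE h1.
Qed.

Lemma C_far' a i h : a != i -> 1 < dist C (inl a) (inr (i,h)).
Proof. by move=> hai; apply: dist_gt; [exact: ltnW|rewrite reach1 /= (negbTE hai)]. Qed.

Lemma C_apex i h : dist C (inl i) (inr (i,h)) = 1.
Proof.
apply: dist_exact => //; first exact: ltn_trans hN.
  by rewrite reach1 /=.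
Qed.

Lemma tr_le2 h k : tr h k <= 2.
Proof. by rewrite /tr; case: ifP => //; case: ifP. Qed.

End Corona.

Section Sets.
Variables (T1 T2 : finType) (eG : rel T1) (eH : rel T2).
Local Notation C := (corona_rel eG eH).
Local Notation J := (join_rel eH K1).

Definition resH (Y : {set T2}) :=
  [forall h, forall k, (h != k) && ~~ eH h k ==> [exists x in Y, tr eH h x != tr eH k x]].

Lemma inr_inj' (A B : Type) : injective (@inr A B). Proof. by move=> a b []. Qed.
Lemma inl_inj' (A B : Type) : injective (@inl A B). Proof. by move=> a b []. Qed.

Section JS.
Hypothesis hJ : 2 < #|{: T2 + unit}|.

Lemma J_in h k : dist J (inl h) (inl k) = tr eH h k.
Proof.
rewrite /tr; case: eqP => [->|hk]; first exact: dist_self.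
case: ifP => he.
  apply: dist_exact; first exact: ltn_trans hJ.
    by rewrite reach1 /= he orbT.
  by rewrite /= inl_eq; apply/eqP.
apply: dist_exact => //.
  by apply: (@reach2 _ _ _ (inr tt)) => /=.
by rewrite reach1 /= he orbF inl_eq; apply/eqP.
Qed.

Lemma J_apex h t : dist J (inl h) (inr t) = 1.
Proof.
apply: dist_exact => //; first exact: ltn_trans hJ.
by rewrite reach1 /=.
Qed.

Lemma res_J_to_H X : nonlocal_resolvingb J X -> resH [set k | inl k \in X].
Proof.
move=> hX; apply/forallP => h; apply/forallP => k; apply/implyP => /andP[hk hn].
move: hX => /forallP/(_ (inl h))/forallP/(_ (inl k))/implyP.
rewrite inl_eq hk /= hn => /(_ isT) /existsP[x /andP[xX hd]].
case: x xX hd => [x'|t] xX hd.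
  by apply/existsP; exists x'; rewrite inE xX /= -!J_in.
by rewrite !J_apex eqxx in hd.
Qed.

Lemma res_H_to_J Y : resH Y -> nonlocal_resolvingb J (inl @: Y).
Proof.
move=> hY; apply/forallP => u; apply/forallP => v; apply/implyP => /andP[huv hn].
case: u v huv hn => [h|t] [k|t'] huv hn //=.
  move: hY => /forallP/(_ h)/forallP/(_ k)/implyP.
  move: huv; rewrite inl_eq => huv; rewrite huv /= hn => /(_ isT) /existsP[x /andP[xY hd]].
  by apply/existsP; exists (inl x); rewrite mem_imset ?xY //= ?J_in //; exact: inl_inj'.
Qed.
End JS.

Section CS.
Hypothesis hN : 2 < #|{: T1 + T1 * T2}|.

Lemma res_C_to_H W i : nonlocal_resolvingb C W -> resH [set k | inr (i,k) \in W].
Proof.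
move=> hW; apply/forallP => h; apply/forallP => k; apply/implyP => /andP[hk hn].
move: hW => /forallP/(_ (inr (i,h)))/forallP/(_ (inr (i,k)))/implyP.
rewrite !seqE eqxx hk /= eqxx /= hn => /(_ isT) /existsP[x /andP[xW hd]].
case: x xW hd => [a|[j k']] xW hd.
  by move: hd; rewrite (C_out eG eH h k) ?eqxx.
case: (eqVneq j i) => [eji|nji].
  by subst j; apply/existsP; exists k'; rewrite inE xW /= -!(C_in eG eH hN i).
by move: hd; rewrite (C_out eG eH h k) ?eqxx.
Qed.
Lemma res_H_to_C Y : resH Y -> Y != set0 ->
  nonlocal_resolvingb C (inr @: setX [set: T1] Y).
Proof.
move=> hY /set0Pn[y0 y0Y].
have memW : forall a y, y \in Y -> inr (a,y) \in (@inr T1 (T1 * T2) @: setX [set: T1] Y).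
  by move=> a y hy; rewrite mem_imset ?in_setX ?inE //; exact: inr_inj'.
apply/forallP => u; apply/forallP => v; apply/implyP => /andP[huv hn].
case: u v huv hn => [a|[i h]] [b|[j k]] huv hn /=.
- apply/existsP; exists (inr (a,y0)); rewrite memW //= (C_apex eG eH hN) ltn_eqF //.
  by apply: (C_far' eG eH hN); move: huv; rewrite inl_eq eq_sym.
- apply/existsP; exists (inr (a,y0)); rewrite memW //= (C_apex eG eH hN) ltn_eqF //.
  by apply: (ltn_trans _ (C_far eG eH hN _ _ _)) => //; rewrite eq_sym.
- apply/existsP; exists (inr (b,y0)); rewrite memW //= (C_apex eG eH hN) gtn_eqF //.
  by apply: (ltn_trans _ (C_far eG eH hN _ _ _)) => //; rewrite eq_sym.
- case: (eqVneq i j) => [eij|nij].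
    subst j; move: hn huv => /=; rewrite eqxx /= !seqE eqxx /= => hn hk.
    move: hY => /forallP/(_ h)/forallP/(_ k)/implyP.
    rewrite hk hn => /(_ isT) /existsP[x /andP[xY hd]].
    by apply/existsP; exists (inr (i,x)); rewrite memW //= !(C_in eG eH hN).
  apply/existsP; exists (inr (i,y0)); rewrite memW //= (C_in eG eH hN) ltn_eqF //.
  by apply: (leq_ltn_trans (tr_le2 _ _ _)); apply: (C_far eG eH hN); rewrite eq_sym.
Qed.
End CS.

Lemma card_C (W : {set T1 + T1 * T2}) :
  \sum_i #|[set k | inr (i,k) \in W]| <= #|W|.
Proof.
have -> : \sum_i #|[set k | inr (i,k) \in W]| = \sum_i \sum_k (inr (i,k) \in W : nat).
  apply: eq_bigr => i _; rewrite -sum1_card big_mkcond /=; apply: eq_bigr => k _.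
  by rewrite inE; case: (_ \in W).
rewrite pair_big /=.
have -> : \sum_(p : T1 * T2) (inr (p.1, p.2) \in W : nat) = #|[set p | inr p \in W]|.
  rewrite -sum1_card [RHS]big_mkcond /=; apply: eq_bigr => -[i k] _.
  by rewrite inE; case: (_ \in W).
rewrite -(card_imset _ (@inr_inj' T1 (T1 * T2))); apply: subset_leq_card.
by apply/subsetP => x /imsetP[p]; rewrite inE => hp ->.
Qed.
End Sets.

Theorem theorem3p2 (T1 T2 : finType) (eG : rel T1) (eH : rel T2) :
  simple_graph eG -> connected_graph eG ->
  simple_graph eH -> ~ complete_graph eH ->
  dim_nl (corona_rel eG eH) = #|T1| * dim_nl (join_rel eH K1).
Proof.
move=> _ _ _ hnc.
have [h0 [k0 [hk0 hn0]]] : exists h k, h != k /\ ~~ eH h k.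
  case: (boolP [exists h, exists k, (h != k) && ~~ eH h k]) => [/existsP[h /existsP[k /andP[a b]]]|hno].
    by exists h, k.
  exfalso; apply: hnc => u v huv; apply/negPn/negP => hn; move/negP: hno; apply.
  by apply/existsP; exists u; apply/existsP; exists v; rewrite huv hn.
have hT2 : 1 < #|T2|.
  by have := max_card [set h0; k0]; rewrite cards2 hk0.
have resT : resH eH [set: T2].
  apply/forallP => h; apply/forallP => k; apply/implyP => /andP[hk _].
  have hkh : (k == h) = false by rewrite eq_sym (negbTE hk).
  apply/existsP; exists h; rewrite inE /tr eqxx hkh /=.
  by case: ifP.
have exm : exists n, [exists Y : {set T2}, resH eH Y && (#|Y| == n)].
  by exists #|T2|; apply/existsP; exists setT; rewrite resT cardsT eqxx.
case: (ex_minnP exm) => m /existsP[Y0 /andP[rY0 /eqP cY0]] mmin.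
have mle : forall Y, resH eH Y -> m <= #|Y|.
  by move=> Y hY; apply: mmin; apply/existsP; exists Y; rewrite hY eqxx.
have mT2 : m <= #|T2| by rewrite -cY0 max_card.
have nY0 : Y0 != set0.
  move: rY0 => /forallP/(_ h0)/forallP/(_ k0)/implyP; rewrite hk0 hn0 => /(_ isT).
  by case/existsP => x /andP[xY _]; apply/set0Pn; exists x.
have hJ : 2 < #|{: T2 + unit}| by rewrite card_sum card_unit addn1.
have dJ : dim_nl (join_rel eH K1) = m.
  apply/eqP; rewrite eqn_leq; apply/andP; split.
    rewrite /dim_nl; apply: leq_trans (bigmin_le _ _ (res_H_to_J hJ rY0)) _.
    by rewrite card_imset ?cY0 //; exact: inl_inj'.
  apply: bigmin_ge; first by rewrite card_sum card_unit addn1 ltnW.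
  move=> X hX; apply: leq_trans (mle _ (res_J_to_H hJ hX)) _.
  rewrite -(card_imset _ (@inl_inj' T2 unit)); apply: subset_leq_card.
  by apply/subsetP => x /imsetP[p]; rewrite inE => hp ->.
rewrite dJ.
case: (posnP #|T1|) => [h1|h1].
  rewrite h1 mul0n; apply/eqP; rewrite -leqn0.
  have hres : nonlocal_resolvingb (corona_rel eG eH) set0.
    apply/forallP => u; exfalso; have := max_card (pred1 u).
    by rewrite card_sum card_prod h1 card1.
  by rewrite /dim_nl; apply: leq_trans (bigmin_le _ _ hres) _; rewrite cards0.
have hN : 2 < #|{: T1 + T1 * T2}|.
  rewrite card_sum card_prod.
  have : 2 <= #|T1| * #|T2| by rewrite -(mul1n 2) leq_mul.
  lia.
apply/eqP; rewrite eqn_leq; apply/andP; split.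
  rewrite /dim_nl; apply: leq_trans (bigmin_le _ _ (res_H_to_C eG hN rY0 nY0)) _.
  by rewrite card_imset ?cardsX ?cardsT ?cY0 //; exact: inr_inj'.
apply: bigmin_ge.
  by rewrite card_sum card_prod; apply: leq_trans (leq_addl _ _); rewrite leq_mul.
move=> W hW; apply: leq_trans (card_C W).
rewrite -sum_nat_const; apply: leq_sum => i _.
exact: mle (res_C_to_H hN i hW).
Qed.
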